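(* Let $q>2$ be a prime power, $R=M_2(\mathbb F_q)$, $U_R=\mathrm{GL}_2(\mathbb F_q)$, $\alpha\in(0,1)$, and let $\pi$ be the stationary distribution of the Markov chain $(X^U_t)$ on $R$ defined below. Let $D=q^3+q^2-q+(q^2-1)(q^2-q)\alpha$. Then \[\pi(x)=\begin{cases}\dfrac{\alpha}{D}, & x\in U_R,\\[2mm] \dfrac{q^2\alpha}{(1+(q^2-1)\alpha)\,D}, & x\notin U_R,\ x\ne0,\\[2mm] \dfrac{q^3+q^2-q-q(q^2-1)\alpha}{(1+(q^2-1)\alpha)\,D}, & x=0.\end{cases}\]
   Context: The chain $(X^U_t)$ on $R$: at each step an independent coin with Heads probability $\alpha$ is tossed; on Heads, $X_{t+1}=X_t+Y$ with $Y$ uniform on $R$; on Tails, $X_{t+1}=Z\cdot X_t$ with $Z$ uniform on $R$ (all independent). *)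

(* Defs.v *)
From HB Require Import structures.
From mathcomp Require Import all_boot all_order all_algebra all_field.
Set Implicit Arguments. Unset Strict Implicit. Unset Printing Implicit Defensive.
Import Order.TTheory GRing.Theory Num.Theory.
Local Open Scope ring_scope.

(* One-step transition probability of the chain X^U on M_2(F):
   with probability alpha, X_{t+1} = X_t + Y, Y uniform on M_2(F);
   with probability 1 - alpha, X_{t+1} = Z *m X_t, Z uniform on M_2(F). *)
Definition chainP (F : finFieldType) (R : realFieldType) (alpha : R)
    (x y : 'M[F]_2) : R :=
  alpha * (#|[pred Y : 'M[F]_2 | x + Y == y]|%:R / #|{: 'M[F]_2}|%:R)
  + (1 - alpha) * (#|[pred Z : 'M[F]_2 | Z *m x == y]|%:R / #|{: 'M[F]_2}|%:R).

Definition is_stationary (F : finFieldType) (R : realFieldType) (alpha : R)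
    (pi : 'M[F]_2 -> R) : Prop :=
  (forall x, 0 <= pi x) /\ (\sum_x pi x = 1) /\
  (forall y, pi y = \sum_x pi x * chainP alpha x y).

(* Main.v *)
Require Import Defs.
From HB Require Import structures.
From mathcomp Require Import all_boot all_order all_algebra all_field.
From mathcomp Require Import ring lra.
Import Order.TTheory GRing.Theory Num.Theory.
Local Open Scope ring_scope.
Set Implicit Arguments. Unset Strict Implicit. Unset Printing Implicit Defensive.


Definition Nc (F : finFieldType) (x y : 'M[F]_2) : nat :=
  #|[pred Z : 'M[F]_2 | Z *m x == y]|.

Lemma card_pred_inj (T : finType) (f : T -> T) (P : pred T) :
  injective f -> #|[pred x | P (f x)]| = #|[pred x | P x]|.
Proof. by move=> fI; rewrite -!sum1_card [RHS](reindex_inj fI). Qed.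

Lemma card_unitmx (F : finFieldType) :
  #|[pred x : 'M[F]_2 | x \in unitmx]| = (#|F| * #|F|.-1 ^ 2 * #|F|.+1)%N.
Proof. by rewrite -card_GL_2 cardsT /= card_sub; apply: eq_card. Qed.

Lemma sumNc (F : finFieldType) (x : 'M[F]_2) :
  (\sum_y Nc x y = #|F| ^ 4)%N.
Proof.
rewrite -[(_ ^ 4)%N](card_mx F 2 2) -sum1_card.
rewrite [RHS](partition_big (fun Z => Z *m x) predT) //=.
by apply: eq_bigr => y _; rewrite /Nc -sum1_card; apply: eq_bigl => Z; rewrite !inE.
Qed.

Lemma Nc_unit (F : finFieldType) (x y : 'M[F]_2) : x \in unitmx -> Nc x y = 1%N.
Proof.
move=> xu; rewrite /Nc; transitivity #|pred1 (y *m invmx x)|; last exact: card1.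
apply: eq_card => Z.
rewrite !inE; apply/eqP/eqP => [<-|->]; by rewrite ?mulmxK ?mulmxKV.
Qed.

Lemma Nc_unitR (F : finFieldType) (x y : 'M[F]_2) :
  y \in unitmx -> x \notin unitmx -> Nc x y = 0%N.
Proof.
move=> yu xn; rewrite /Nc; apply: eq_card0 => Z; rewrite !inE.
apply/negP => /eqP Ey; move: yu; rewrite -Ey unitmx_mul.
by rewrite (negbTE xn) andbF.
Qed.

Lemma Nc_0 (F : finFieldType) (y : 'M[F]_2) :
  Nc 0 y = if y == 0 then (#|F| ^ 4)%N else 0%N.
Proof.
rewrite /Nc; case: eqP => [->|/eqP ny].
  by rewrite -(card_mx F 2 2); apply: eq_card => Z; rewrite !inE mulmx0 eqxx.
by apply: eq_card0 => Z; rewrite !inE mulmx0 eq_sym (negbTE ny).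
Qed.

Lemma Nc_mull (F : finFieldType) (g x y : 'M[F]_2) :
  g \in unitmx -> Nc x (g *m y) = Nc x y.
Proof.
move=> gu; rewrite /Nc -(@card_pred_inj _ (mulmx (invmx g)) (fun Z => Z *m x == y)).
  apply: eq_card => Z; rewrite !inE -mulmxA.
  apply/eqP/eqP => [->|<-]; by rewrite ?mulKmx ?mulKVmx.
by apply: (can_inj (g := mulmx g)) => Z; rewrite mulKVmx.
Qed.

Lemma Nc_mulr (F : finFieldType) (h x y : 'M[F]_2) :
  h \in unitmx -> Nc x (y *m h) = Nc (x *m invmx h) y.
Proof.
move=> hu; rewrite /Nc; apply: eq_card => Z; rewrite !inE mulmxA.
apply/eqP/eqP => [->|<-]; by rewrite ?mulmxK ?mulmxKV.
Qed.

Lemma rank1 (F : finFieldType) (x : 'M[F]_2) :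
  x \notin unitmx -> x != 0 -> \rank x = 1%N.
Proof.
rewrite -row_full_unit /row_full -mxrank_eq0 => h1 h2.
have := rank_leq_col x; case: (\rank x) h1 h2 => [|[|[|]]] //.
Qed.

Definition mk2 (F : finFieldType) (ab : F * F) : 'M[F]_2 :=
  \matrix_(i, j) (if j == 0 then 0 else if i == 0 then ab.1 else ab.2).

Lemma ord2P (i : 'I_2) : i = 0 \/ i = 1.
Proof. by case: i => [[|[|//]] Hi]; [left|right]; apply: val_inj. Qed.

Lemma card_kerP (F : finFieldType) :
  #|[pred W : 'M[F]_2 | W *m (pid_mx 1 : 'M[F]_2) == 0]| = (#|F| ^ 2)%N.
Proof.
transitivity #|[set mk2 ab | ab in [set: F * F]]|.
  apply: eq_card => W; rewrite !inE; apply/eqP/imsetP.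
    move=> H; exists (W 0 1, W 1 1); first by rewrite inE.
    have Hi : forall i, W i 0 = 0.
      move=> i; have := congr1 (fun M : 'M[F]_2 => M i 0) H.
      by rewrite !mxE big_ord_recl big_ord1 !mxE /= mulr1 mulr0 addr0.
    apply/matrixP => i j; rewrite mxE.
    by case: (ord2P i) => ->; case: (ord2P j) => -> /=.
  move=> [[a b] _ ->]; apply/matrixP => i j.
  rewrite !mxE big_ord_recl big_ord1 !mxE /=.
  by case: (ord2P i) => ->; case: (ord2P j) => -> /=; rewrite ?mulr0 ?mul0r ?addr0.
rewrite card_imset; first by rewrite cardsT card_prod mulnn.
move=> [a b] [c d] /matrixP E.
have := E 0 1; have := E 1 1; rewrite !mxE /= => -> ->. done.
Qed.

Lemma Nc_rank1_0 (F : finFieldType) (x : 'M[F]_2) :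
  x \notin unitmx -> x != 0 -> Nc x 0 = (#|F| ^ 2)%N.
Proof.
move=> xn xz; have r1 := rank1 xn xz.
have Ex : x = col_ebase x *m pid_mx 1 *m row_ebase x by rewrite -{1}(mulmx_ebase x) r1.
rewrite Ex; set g := col_ebase x; set h := row_ebase x.
have gu : g \in unitmx by exact: col_ebase_unit.
have hu : h \in unitmx by exact: row_ebase_unit.
transitivity (Nc (g *m pid_mx 1 *m h) (0 *m h)); first by rewrite mul0mx.
rewrite Nc_mulr // mulmxK //.
rewrite -(card_kerP F) /Nc.
transitivity #|[pred Z : 'M[F]_2 | (fun W : 'M[F]_2 => W *m (pid_mx 1 : 'M[F]_2) == 0) (mulmxr g Z)]|.
  by apply: eq_card => Z; rewrite !inE /= mulmxA.
apply: card_pred_inj; apply: (can_inj (g := mulmxr (invmx g))) => Z /=.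
by rewrite mulmxK.
Qed.

Lemma card_add1 (F : finFieldType) (x y : 'M[F]_2) :
  #|[pred Y : 'M[F]_2 | x + Y == y]| = 1%N.
Proof.
transitivity #|pred1 (y - x)|; last exact: card1.
apply: eq_card => Y; rewrite !inE; apply/eqP/eqP => [<-|->].
  by rewrite addrC addKr.
by rewrite addrC subrK.
Qed.

Lemma chain_sum (F : finFieldType) (R : realFieldType) (alpha : R)
   (pi : 'M[F]_2 -> R) (y : 'M[F]_2) :
  \sum_x pi x * chainP alpha x y =
  alpha / #|{: 'M[F]_2}|%:R * \sum_x pi x
  + (1 - alpha) / #|{: 'M[F]_2}|%:R * \sum_x pi x * (Nc x y)%:R.
Proof.
rewrite !mulr_sumr -big_split /=; apply: eq_bigr => x _.
rewrite /chainP card_add1 /Nc; ring.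
Qed.

Lemma uniq_stat (F : finFieldType) (R : realFieldType) (alpha : R)
   (pi1 pi2 : 'M[F]_2 -> R) :
  0 < alpha -> alpha < 1 -> \sum_x pi1 x = \sum_x pi2 x ->
  (forall y, pi1 y = \sum_x pi1 x * chainP alpha x y) ->
  (forall y, pi2 y = \sum_x pi2 x * chainP alpha x y) ->
  forall y, pi1 y = pi2 y.
Proof.
move=> a0 a1 Es S1 S2.
set Q : R := #|{: 'M[F]_2}|%:R.
have Q0 : 0 < Q by rewrite /Q ltr0n; apply/card_gt0P; exists 0.
pose d x := pi1 x - pi2 x.
have Ed : forall y, d y = (1 - alpha) / Q * \sum_x d x * (Nc x y)%:R.
  move=> y; rewrite /d {1}S1 {1}S2 !chain_sum -Es.
  rewrite [X in _ = _ * X](_ : _ = \sum_x pi1 x * (Nc x y)%:R - \sum_x pi2 x * (Nc x y)%:R).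
    ring.
  by rewrite -sumrB; apply: eq_bigr => x _; rewrite mulrBl.
have SN : forall x : 'M[F]_2, \sum_y ((Nc x y)%:R : R) = Q.
  by move=> x; have := congr1 (fun n => n%:R : R) (@sumNc _ x); rewrite natr_sum /Q card_mx => ->.
have key : \sum_y `|d y| <= (1 - alpha) * \sum_y `|d y|.
  apply: le_trans (_ : \sum_y ((1 - alpha) / Q * \sum_x `|d x| * (Nc x y)%:R) <= _).
    apply: ler_sum => y _; rewrite Ed normrM ger0_norm; last first.
      by apply: divr_ge0; [rewrite subr_ge0 ltW|rewrite ltW].
    apply: ler_wpM2l; first by apply: divr_ge0; [rewrite subr_ge0 ltW|rewrite ltW].
    apply: le_trans (ler_norm_sum _ _ _) _.
    by apply: ler_sum => x _; rewrite normrM normr_nat.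
  rewrite -mulr_sumr exchange_big /=.
  rewrite (eq_bigr (fun x => `|d x| * Q)); last first.
    by move=> x _; rewrite -mulr_sumr SN.
  rewrite -mulr_suml.
  by rewrite le_eqVlt; apply/orP; left; apply/eqP; field; rewrite gt_eqF.
have S0 : \sum_y `|d y| = 0.
  apply/eqP; rewrite eq_le sumr_ge0 ?andbT; last by move=> i _; exact: normr_ge0.
  have : alpha * \sum_y `|d y| <= 0 by move: key; rewrite mulrBl mul1r; lra.
  by rewrite pmulr_rle0.
move=> y; have := psumr_eq0P (fun i _ => normr_ge0 (d i)) S0 (i := y) isT.
by move/eqP; rewrite normr_eq0 subr_eq0 => /eqP.
Qed.

Definition cls (F : finFieldType) (R : Type) (a b c : R) (x : 'M[F]_2) : R :=
  if x \in unitmx then a else if x != 0 then b else c.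

Lemma cls_mulr (F : finFieldType) (R : Type) (a b c : R) (x h : 'M[F]_2) :
  h \in unitmx -> cls a b c (x *m h) = cls a b c x.
Proof.
move=> hu; rewrite /cls unitmx_mul hu andbT.
have -> : (x *m h != 0) = (x != 0).
  congr negb; apply/eqP/eqP => [E|->]; last by rewrite mul0mx.
  by rewrite -(mulmxK hu x) E mul0mx.
done.
Qed.

Lemma cls_mul (F : finFieldType) (R : realFieldType) (a b c a' b' c' : R) (x : 'M[F]_2) :
  cls a b c x * cls a' b' c' x = cls (a * a') (b * b') (c * c') x.
Proof. by rewrite /cls; case: (x \in unitmx); case: (x != 0). Qed.

Lemma unitmx0' (F : finFieldType) : (0 : 'M[F]_2) \notin unitmx.
Proof. by rewrite unitmxE det0 unitr0. Qed.

Lemma sum_cls (F : finFieldType) (R : realFieldType) (a b c : R) :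
  \sum_(y : 'M[F]_2) cls a b c y =
  a * #|[pred y : 'M[F]_2 | y \in unitmx]|%:R
  + b * #|[pred y : 'M[F]_2 | (y \notin unitmx) && (y != 0)]|%:R + c.
Proof.
rewrite (bigID (fun y => y \in unitmx)) /=.
rewrite (eq_bigr (fun _ => a)); last by move=> y yu; rewrite /cls yu.
rewrite sumr_const (bigD1 0) /=; last exact: unitmx0'.
rewrite /cls (negbTE (unitmx0' F)) eqxx /=.
rewrite (eq_bigr (fun _ => b)); last first.
  by move=> y /andP[/negbTE -> ->].
have -> : \sum_(i : 'M[F]_2 | (i \notin unitmx) && (i != 0)) b =
    b *+ #|[pred y : 'M[F]_2 | (y \notin unitmx) && (y != 0)]|.
  by rewrite -sumr_const; apply: eq_bigl => i; rewrite inE.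
have -> : #|[pred y : 'M[F]_2 | y \in unitmx]| = #|unitmx : pred 'M[F]_2| by apply: eq_card.
move: #|unitmx : pred _| #|[pred y : 'M[F]_2 | (y \notin unitmx) && (y != 0)]| => n m.
rewrite !mulr_natr; ring.
Qed.

Definition fsum (F : finFieldType) (R : realFieldType) (a b c : R) (y : 'M[F]_2) : R :=
  \sum_x cls a b c x * (Nc x y)%:R.

Lemma f_mull (F : finFieldType) (R : realFieldType) (a b c : R) (g y : 'M[F]_2) :
  g \in unitmx -> fsum a b c (g *m y) = fsum a b c y.
Proof. by move=> gu; apply: eq_bigr => x _; rewrite Nc_mull. Qed.

Lemma f_mulr (F : finFieldType) (R : realFieldType) (a b c : R) (h y : 'M[F]_2) :
  h \in unitmx -> fsum a b c (y *m h) = fsum a b c y.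
Proof.
move=> hu; rewrite /fsum.
have hI : injective (mulmxr h : 'M[F]_2 -> 'M[F]_2).
  by apply: (can_inj (g := mulmxr (invmx h))) => Z /=; rewrite mulmxK.
rewrite (reindex_inj hI) /=; apply: eq_bigr => x _.
by rewrite Nc_mulr // cls_mulr // mulmxK.
Qed.

Lemma f_rank1 (F : finFieldType) (R : realFieldType) (a b c : R) (y : 'M[F]_2) :
  y \notin unitmx -> y != 0 -> fsum a b c y = fsum a b c (pid_mx 1 : 'M[F]_2).
Proof.
move=> yn yz; have r1 := rank1 yn yz.
rewrite -{1}(mulmx_ebase y) r1 f_mulr ?row_ebase_unit // f_mull ?col_ebase_unit //.
Qed.

Lemma f_unit (F : finFieldType) (R : realFieldType) (a b c : R) (y : 'M[F]_2) :
  y \in unitmx -> fsum a b c y = a * #|[pred x : 'M[F]_2 | x \in unitmx]|%:R.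
Proof.
move=> yu; rewrite /fsum.
rewrite (eq_bigr (fun x => cls a b c x * cls 1 0 0 x)); last first.
  move=> x _; congr (_ * _); rewrite /cls; case: ifP => xu.
    by rewrite Nc_unit.
  by rewrite Nc_unitR ?xu //; case: (x != 0).
rewrite (eq_bigr (fun x => cls (a * 1) (b * 0) (c * 0) x)); last by move=> x _; rewrite cls_mul.
by rewrite sum_cls !mulr0 !mul0r !addr0 mulr1.
Qed.

Lemma f_zero (F : finFieldType) (R : realFieldType) (a b c : R) :
  fsum a b c (0 : 'M[F]_2) =
  a * #|[pred y : 'M[F]_2 | y \in unitmx]|%:R
  + b * (#|F| ^ 2)%:R * #|[pred y : 'M[F]_2 | (y \notin unitmx) && (y != 0)]|%:R
  + c * (#|F| ^ 4)%:R.
Proof.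
rewrite /fsum.
rewrite (eq_bigr (fun x => cls a b c x * cls 1 (#|F| ^ 2)%:R (#|F| ^ 4)%:R x)); last first.
  move=> x _; congr (_ * _); rewrite /cls; case: ifP => xu.
    by rewrite Nc_unit.
  case: ifP => xz; first by rewrite Nc_rank1_0 // xu.
  by move/negbFE/eqP: xz => ->; rewrite Nc_0 eqxx.
rewrite (eq_bigr (fun x => cls (a * 1) (b * (#|F| ^ 2)%:R) (c * (#|F| ^ 4)%:R) x)); last by move=> x _; rewrite cls_mul.
by rewrite sum_cls mulr1.
Qed.

Lemma sum_f (F : finFieldType) (R : realFieldType) (a b c : R) :
  \sum_(y : 'M[F]_2) fsum a b c y = (#|F| ^ 4)%:R * \sum_(x : 'M[F]_2) cls a b c x.
Proof.
rewrite /fsum exchange_big /= mulr_sumr; apply: eq_bigr => x _.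
rewrite -mulr_sumr mulrC; congr (_ * _).
by have := congr1 (fun n => n%:R : R) (@sumNc _ x); rewrite natr_sum.
Qed.


Lemma alg_all (R : realFieldType) (q al : R) :
  2 < q -> 0 < al -> al < 1 ->
  let D := q ^+ 3 + q ^+ 2 - q + (q ^+ 2 - 1) * (q ^+ 2 - q) * al in
  let E := 1 + (q ^+ 2 - 1) * al in
  let a := al / D in
  let b := q ^+ 2 * al / (E * D) in
  let c := (q ^+ 3 + q ^+ 2 - q - q * (q ^+ 2 - 1) * al) / (E * D) in
  let u := (q ^+ 2 - 1) * (q ^+ 2 - q) in
  let Q := q ^+ 4 in
  let s := Q - 1 - u in
  let f0 := a * u + b * q ^+ 2 * s + c * Q in
  [/\ 0 <= a, 0 <= b, 0 <= c & s != 0] /\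
   [/\ a * u + b * s + c = 1,
       a = al / Q + (1 - al) / Q * (a * u),
       c = al / Q + (1 - al) / Q * f0 &
       b = al / Q + (1 - al) / Q * ((Q - a * u * u - f0) / s)].
Proof.
move=> q2 a0 a1 D E a b c u Q s f0.
have q0 : 0 < q by lra.
have h1 : 0 < q ^+ 2 - 1 by rewrite expr2; nra.
have h2 : 0 < q ^+ 2 - q by rewrite expr2; nra.
have h3 : 0 < q ^+ 3 + q ^+ 2 - q.
  have -> : q ^+ 3 + q ^+ 2 - q = q * (q ^+ 2 - q) + 2 * q * (q - 1) + q by rewrite !exprS expr0; ring.
  have : 0 < q * (q ^+ 2 - q) by apply: mulr_gt0.
  nra.
have Dp : 0 < D.
  rewrite /D; have : 0 <= (q ^+ 2 - 1) * (q ^+ 2 - q) * al.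
    by apply: mulr_ge0; [apply: mulr_ge0|]; apply: ltW.
  lra.
have Ep : 0 < E.
  rewrite /E; have : 0 <= (q ^+ 2 - 1) * al by apply: mulr_ge0; apply: ltW.
  lra.
have EDp : 0 < E * D by apply: mulr_gt0.
have sE : s = (q ^+ 2 - 1) * (q + 1) by rewrite /s /Q /u; ring.
have sp : 0 < s by rewrite sE; apply: mulr_gt0 => //; lra.
have Qp : 0 < Q by rewrite /Q exprn_gt0.
split; first split.
- by apply: divr_ge0; apply: ltW.
- by apply: divr_ge0; [apply: mulr_ge0; [rewrite exprn_ge0 // ltW|apply: ltW]|apply: ltW].
- apply: divr_ge0; last exact: ltW.
  have -> : q ^+ 3 + q ^+ 2 - q - q * (q ^+ 2 - 1) * al = q ^+ 2 + q * (q ^+ 2 - 1) * (1 - al) by ring.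
  apply: addr_ge0; first by rewrite exprn_ge0 // ltW.
  by apply: mulr_ge0; [apply: mulr_ge0|]; apply: ltW => //; lra.
- by rewrite gt_eqF.
have Dn : D != 0 by rewrite gt_eqF.
have En : E != 0 by rewrite gt_eqF.
have qn : q != 0 by rewrite gt_eqF.
have sn : s != 0 by rewrite gt_eqF.
have Dn' : q ^+ 3 + q ^+ 2 - q + (q ^+ 2 - 1) * (q ^+ 2 - q) * al != 0 := Dn.
have En' : 1 + (q ^+ 2 - 1) * al != 0 := En.
have q1n : q + 1 != 0 by rewrite gt_eqF //; lra.
have h1n : q ^+ 2 - 1 != 0 by rewrite gt_eqF.
split.
- rewrite /a /b /c sE /u /D /E; field; rewrite ?Dn' ?En' ?qn ?q1n ?h1n //.
- rewrite /a /u /Q /D; field; rewrite ?Dn' ?En' ?qn ?q1n ?h1n //.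
- rewrite /f0 /a /b /c sE /u /Q /D /E; field; rewrite ?Dn' ?En' ?qn ?q1n ?h1n //.
- rewrite /f0 /a /b /c /u /Q sE /D /E; field; rewrite ?Dn' ?En' ?qn ?q1n ?h1n //.
Qed.

Lemma alg_all' (R : realFieldType) (q al a b c u Q s f0 : R) :
  2 < q -> 0 < al -> al < 1 ->
  a = al / (q ^+ 3 + q ^+ 2 - q + (q ^+ 2 - 1) * (q ^+ 2 - q) * al) ->
  b = q ^+ 2 * al / ((1 + (q ^+ 2 - 1) * al) * (q ^+ 3 + q ^+ 2 - q + (q ^+ 2 - 1) * (q ^+ 2 - q) * al)) ->
  c = (q ^+ 3 + q ^+ 2 - q - q * (q ^+ 2 - 1) * al) / ((1 + (q ^+ 2 - 1) * al) * (q ^+ 3 + q ^+ 2 - q + (q ^+ 2 - 1) * (q ^+ 2 - q) * al)) ->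
  u = (q ^+ 2 - 1) * (q ^+ 2 - q) -> Q = q ^+ 4 -> s = Q - 1 - u ->
  f0 = a * u + b * q ^+ 2 * s + c * Q ->
  [/\ 0 <= a, 0 <= b, 0 <= c & s != 0] /\
   [/\ a * u + b * s + c = 1,
       a = al / Q + (1 - al) / Q * (a * u),
       c = al / Q + (1 - al) / Q * f0 &
       b = al / Q + (1 - al) / Q * ((Q - a * u * u - f0) / s)].
Proof.
move=> q2 a0 a1 -> -> -> -> -> -> ->.
exact: (alg_all q2 a0 a1).
Qed.
Unset Implicit Arguments. Set Strict Implicit.

Theorem proposition5p2 (F : finFieldType) (q : nat) (R : realFieldType)
    (alpha : R) :
  #|F| = q -> (2 < q)%N -> 0 < alpha -> alpha < 1 ->
  let D := (q%:R ^+ 3 + q%:R ^+ 2 - q%:R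
            + (q%:R ^+ 2 - 1) * (q%:R ^+ 2 - q%:R) * alpha : R) in
  forall pi : 'M[F]_2 -> R,
    is_stationary alpha pi <->
    (forall x : 'M[F]_2,
       pi x = if x \in unitmx then alpha / D
              else if x != 0 then
                q%:R ^+ 2 * alpha / ((1 + (q%:R ^+ 2 - 1) * alpha) * D)
              else (q%:R ^+ 3 + q%:R ^+ 2 - q%:R - q%:R * (q%:R ^+ 2 - 1) * alpha)
                   / ((1 + (q%:R ^+ 2 - 1) * alpha) * D)).
Proof.
move=> Fq q2 a0 a1 D pi.
set qr : R := q%:R.
have q2r : 2 < qr by rewrite /qr ltr_nat.
pose a := alpha / D.
pose b := qr ^+ 2 * alpha / ((1 + (qr ^+ 2 - 1) * alpha) * D).
pose c := (qr ^+ 3 + qr ^+ 2 - qr - qr * (qr ^+ 2 - 1) * alpha)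
                   / ((1 + (qr ^+ 2 - 1) * alpha) * D).
pose pi0 := @cls F R a b c.
pose u : R := #|[pred y : 'M[F]_2 | y \in unitmx]|%:R.
pose s : R := #|[pred y : 'M[F]_2 | (y \notin unitmx) && (y != 0)]|%:R.
pose Q : R := qr ^+ 4.
have Qm : #|{: 'M[F]_2}|%:R = Q.
  by rewrite card_mx Fq natrX.
have QR : (#|F| ^ 4)%:R = Q by rewrite Fq natrX.
have uR : u = (qr ^+ 2 - 1) * (qr ^+ 2 - qr).
  rewrite /u card_unitmx Fq !natrM -subn1 natrB; last by apply: ltnW; apply: ltn_trans q2.
  rewrite -addn1 natrD /qr; ring.
have sR : s = Q - 1 - u.
  have := @sum_cls F R 1 1 1.
  rewrite (eq_bigr (fun _ => 1)); last by move=> y _; rewrite /cls; case: ifP => //; case: ifP.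
  have -> : \sum_(y : 'M[F]_2) (1 : R) = #|{: 'M[F]_2}|%:R.
    by rewrite -sumr_const; apply: eq_bigl => i; rewrite inE.
  rewrite Qm -/u -/s !mul1r => ->; ring.
set f0 := fsum a b c (0 : 'M[F]_2).
have f0R : f0 = a * u + b * qr ^+ 2 * s + c * Q.
  by rewrite /f0 f_zero QR Fq natrX.
have [[ha hb hc sn] [Hsum Hu H0 H1]] :=
  alg_all' q2r a0 a1 (erefl a) (erefl b) (erefl c) uR (erefl Q) sR f0R.
have P1 : \sum_x pi0 x = 1 by rewrite /pi0 sum_cls -/u -/s.
set f1 := fsum a b c (pid_mx 1 : 'M[F]_2).
have Ecls : forall y : 'M[F]_2, fsum a b c y = cls (a * u) f1 f0 y.
  move=> y; rewrite /cls; case: ifP => yu; first by rewrite f_unit.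
  case: ifP => yz; first by rewrite f_rank1 ?yu.
  by move/negbFE/eqP: yz => ->.
have F1 : f1 = (Q - a * u * u - f0) / s.
  have Sf : \sum_(y : 'M[F]_2) fsum a b c y = Q by rewrite sum_f -/pi0 P1 QR mulr1.
  have : \sum_(y : 'M[F]_2) cls (a * u) f1 f0 y = Q.
    by rewrite -Sf; apply: eq_bigr => y _; rewrite Ecls.
  by rewrite sum_cls -/u -/s => <-; field; exact: sn.
have P2 : forall y, pi0 y = \sum_x pi0 x * chainP alpha x y.
  move=> y; rewrite chain_sum P1 Qm mulr1.
  change (\sum_x pi0 x * (Nc x y)%:R) with (fsum a b c y).
  rewrite Ecls /pi0 /cls; case: ifP => _; first exact: Hu.
  by case: ifP => _; [rewrite F1; exact: H1|exact: H0].
have P3 : forall x, 0 <= pi0 x.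
  by move=> x; rewrite /pi0 /cls; case: ifP => _ //; case: ifP.
split.
  move=> [pi_ge0 [pi_sum pi_st]] x.
  have := uniq_stat a0 a1 (etrans pi_sum (esym P1)) pi_st P2 x.
  by move=> ->.
move=> H.
have Hp : forall x, pi x = pi0 x by move=> x; rewrite H.
split; first by move=> x; rewrite Hp.
split; first by rewrite (eq_bigr _ (fun x _ => Hp x)).
move=> y; rewrite Hp P2; apply: eq_bigr => x _; by rewrite Hp.
Qed.
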